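(* Fix $1<p<\infty$ and an integer $r>1$; let $s=r^{1/p}$, $M=\lfloor\log_2 r\rfloor$ and let $\alpha>0$ satisfy $\alpha^M=s$. Let $(x_n)\subseteq\mathcal N_\alpha$ be a block sequence with $\alpha^{-2}\le\|x_n\|_p\le\alpha^{-1}$ for all $n\in\mathbb N$. Then there is a block sequence $(y_n)\subseteq\mathcal N_\alpha$ of $(x_n)$ (i.e. $y_n=\sum_{i\in F_n}c_ix_i$ for finite sets $F_1<F_2<\dots$ of indices and real scalars $c_i$) such that $\alpha^{-3}\le\|J_my_n\|_p\le 1$ for all $n,m\in\mathbb N$.
   Context: $c_{00}$ = finitely supported real sequences; a block sequence $(x_n)$ means $\max{\rm supp}\,x_n<\min{\rm supp}\,x_{n+1}$. For $\beta>0$ let $C_\beta=\{\pm\beta^j: j\in\mathbb Z\}\cup\{0\}$ and $\mathcal N_\beta=\{x\in c_{00}: x(i)\in C_\beta\ \forall i\}$. For $x\in\mathcal N_\alpha$ and $m\in\mathbb N$, $J_{m,x}=\{i\in{\rm supp}\,x: \alpha^{-m}x(i)\in C_s\}$ and $J_mx$ is the restriction of $x$ to $J_{m,x}$. *)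

(* Defs.v *)
From HB Require Import structures.
From mathcomp Require Import all_boot all_order all_algebra.
From mathcomp Require Import all_classical all_reals all_analysis.
Set Implicit Arguments. Unset Strict Implicit. Unset Printing Implicit Defensive.
Import Order.TTheory GRing.Theory Num.Theory.
Local Open Scope ring_scope.

Record c00 (R : realType) := C00 {
  c00_fun :> nat -> R;
  c00_bnd : nat;
  c00_bndP : forall i, (c00_bnd <= i)%N -> c00_fun i = 0 }.

(* the l_p norm (the sum is over indices below the bound, i.e. over a
   set containing the support; independent of the chosen bound) *)
Definition lpnorm (R : realType) (p : R) (x : c00 R) : R :=
  (\sum_(i < c00_bnd x) `|x i| `^ p) `^ p^-1.

Definition block (R : realType) (x : nat -> c00 R) : Prop :=
  forall n m i j, (n < m)%N -> x n i != 0 -> x m j != 0 -> (i < j)%N.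

Definition Cset (R : realType) (beta : R) (t : R) : Prop :=
  t = 0 \/ exists j : int, t = beta ^ j \/ t = - beta ^ j.

Definition Nset (R : realType) (beta : R) (x : c00 R) : Prop :=
  forall i, Cset beta (x i).

Definition Jfun (R : realType) (alpha s : R) (m : nat) (x : c00 R) : nat -> R :=
  fun i => if `[< (x i != 0) /\ Cset s (alpha ^- m * x i) >] then x i else 0.

Lemma Jfun_bnd (R : realType) (alpha s : R) (m : nat) (x : c00 R) :
  forall i, (c00_bnd x <= i)%N -> Jfun alpha s m x i = 0.
Proof. by move=> i hi; rewrite /Jfun c00_bndP //; case: ifP. Qed.

Definition J (R : realType) (alpha s : R) (m : nat) (x : c00 R) : c00 R :=
  @C00 R (Jfun alpha s m x) (c00_bnd x) (@Jfun_bnd R alpha s m x).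

(* Main.v *)
Require Import Defs.
From HB Require Import structures.
From mathcomp Require Import all_boot all_order all_algebra.
From mathcomp Require Import all_classical all_reals all_analysis.
Import Order.TTheory GRing.Theory Num.Theory.
Set Implicit Arguments. Unset Strict Implicit. Unset Printing Implicit Defensive.
Local Open Scope ring_scope.

Lemma Cset_scale (R : realType) (a t : R) (z : int) :
  a != 0 -> Cset a t -> Cset a (a ^ z * t).
Proof.
move=> a0 [->|[j [->|->]]]; first by left; rewrite mulr0.
- by right; exists (z + j); left; rewrite expfzDr.
- by right; exists (z + j); right; rewrite expfzDr // mulrN.
Qed.

Lemma Cset_scaleE (R : realType) (a t : R) (z : int) :
  a != 0 -> Cset a (a ^ z * t) <-> Cset a t.
Proof.
move=> a0; split; last exact: Cset_scale.
move=> /(@Cset_scale _ a _ (-z) a0); by rewrite mulrA -expfzDr // addNr expr0z mul1r.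
Qed.

Lemma expz_inj (R : realType) (a : R) (m n : int) :
  1 < a -> a ^ m = a ^ n -> m = n.
Proof.
move=> a1 E.
have a0 : a != 0 by apply: lt0r_neq0; apply: lt_trans a1.
have E1 : a ^ (m - n) = 1.
  have := E; rewrite -[in LHS](subrK n m) expfzDr // => E2.
  have an0 : a ^ n != 0 by rewrite expfz_eq0 negb_and a0 orbT.
  by apply: (mulIf an0); rewrite mul1r.
have : m - n = 0.
  case: (m - n) E1 => [k|k].
  - move=> Ek; have : a ^+ k == 1 by apply/eqP; exact: Ek.
    rewrite pexprn_eq1 ?(ltW (lt_trans ltr01 a1)) //.
    by rewrite (gt_eqF a1) orbF => /eqP ->.
  - rewrite NegzE -exprnN => /eqP; rewrite invr_eq1 pexprn_eq1 ?(ltW (lt_trans ltr01 a1)) //.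
    by rewrite (gt_eqF a1).
by move/eqP; rewrite subr_eq0 => /eqP.
Qed.

From mathcomp Require Import zify.

Definition jv (R : realType) (alpha s : R) (m : nat) (t : R) : R :=
  if `[< (t != 0) /\ Cset s (alpha ^- m * t) >] then t else 0.

Lemma jv0 (R : realType) (alpha s : R) m : jv alpha s m 0 = 0.
Proof. by rewrite /jv; case: ifP. Qed.

Lemma jv_period (R : realType) (alpha s : R) (M i q : nat) t :
  alpha != 0 -> alpha ^+ M = s -> jv alpha s (i + M * q) t = jv alpha s i t.
Proof.
move=> a0 aM.
have s0 : s != 0 by rewrite -aM expf_eq0 negb_and a0 orbT.
have E : alpha ^- (i + M * q) * t = s ^ (- (q:int)) * (alpha ^- i * t).
  by rewrite -exprnN exprD exprM aM invfM mulrA [_ * (s ^+ q)^-1]mulrC.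
rewrite /jv E; congr (if _ then _ else _); apply: asbool_equiv_eq.
by rewrite (Cset_scaleE _ _ s0).
Qed.

Lemma jv_scale (R : realType) (alpha s : R) (m n : nat) t :
  alpha != 0 ->
  jv alpha s m ((alpha ^+ n)^-1 * t) = (alpha ^+ n)^-1 * jv alpha s (m + n) t.
Proof.
move=> a0.
have E : alpha ^- m * ((alpha ^+ n)^-1 * t) = alpha ^- (m + n) * t.
  by rewrite mulrA -invfM -exprD.
have N : ((alpha ^+ n)^-1 * t != 0) = (t != 0).
  by rewrite mulf_eq0 invr_eq0 expf_eq0 (negbTE a0) andbF.
rewrite /jv E N; case: ifP => _ //; by rewrite mulr0.
Qed.

Lemma Cset_exp (R : realType) (alpha s : R) (M : nat) (e : int) :
  1 < alpha -> alpha ^+ M = s ->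
  Cset s (alpha ^ e) <-> exists j : int, e = (M%:Z) * j.
Proof.
move=> a1 aM; have a0 : 0 < alpha by apply: lt_trans a1.
have sj j : s ^ j = alpha ^ ((M%:Z) * j) by rewrite -exprz_exp -aM.
split.
- move=> [E|[j [E|E]]].
  + by move: (exprz_gt0 e a0); rewrite E ltxx.
  + by exists j; apply: (expz_inj a1); rewrite E sj.
  + by move: (exprz_gt0 e a0); rewrite E sj oppr_gt0 ltNge (ltW (exprz_gt0 _ a0)).
- by move=> [j ->]; right; exists j; left; rewrite sj.
Qed.

Lemma Cset_opp (R : realType) (a t : R) : Cset a (- t) <-> Cset a t.
Proof.
suff H u : Cset a (- u) -> Cset a u.
  by split; [apply: H | move=> h; apply: H; rewrite opprK].
move=> [E|[j [E|E]]].
- by left; rewrite -(opprK u) E oppr0.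
- by right; exists j; right; rewrite -(opprK u) E.
- by right; exists j; left; rewrite -(opprK u) E opprK.
Qed.

Lemma jv_norm (R : realType) (alpha s p : R) (M : nat) (f : int) (i : nat) t :
  1 < alpha -> alpha ^+ M = s -> (t = alpha ^ f \/ t = - alpha ^ f) ->
  `|jv alpha s i t| `^ p =
    if `[< exists j : int, - (i%:Z) + f = (M%:Z) * j >] then `|t| `^ p else 0 `^ p.
Proof.
move=> a1 aM ht.
have a0 : alpha != 0 by apply: lt0r_neq0; apply: lt_trans a1.
have t0 : t != 0.
  by case: ht => ->; rewrite ?oppr_eq0 expfz_eq0 negb_and a0 orbT.
have E : `[< (t != 0) /\ Cset s (alpha ^- i * t) >] =
         `[< exists j : int, - (i%:Z) + f = (M%:Z) * j >].
  apply: asbool_equiv_eq; rewrite -(Cset_exp _ a1 aM).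
  have -> : Cset s (alpha ^- i * t) <-> Cset s (alpha ^ (- (i%:Z) + f)).
    rewrite exprnN expfzDr //.
    case: ht => ->; first by [].
    rewrite mulrN; exact: Cset_opp.
  by split => [[] //|h]; split.
by rewrite /jv E; case: ifP => // _; rewrite normr0.
Qed.

Lemma jv_part (R : realType) (alpha s p : R) (M : nat) t :
  1 < alpha -> alpha ^+ M = s -> (0 < M)%N -> p != 0 -> Cset alpha t ->
  \sum_(i < M) `|jv alpha s i t| `^ p = `|t| `^ p.
Proof.
move=> a1 aM M0 p0 Ct.
have [->|t0] := eqVneq t 0.
  by rewrite normr0 powR0 // big1 // => i _; rewrite jv0 normr0 powR0.
have [f ht] : exists f : int, t = alpha ^ f \/ t = - alpha ^ f.
  by case: Ct => [/eqP|[f hf]]; [rewrite (negbTE t0) | exists f].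
have M0' : (0 < M%:Z) by [].
have i0lt : (`|(f %% M%:Z)%Z|%N < M)%N.
  by rewrite -ltz_nat gez0_abs ?modz_ge0 ?ltz_pmod // -lt0n.
rewrite (bigD1 (Ordinal i0lt)) //= big1 ?addr0.
  rewrite (jv_norm _ _ a1 aM ht); case: asboolP => // [[]].
  exists (f %/ M%:Z)%Z.
  rewrite gez0_abs ?modz_ge0 -?lt0n //.
  by rewrite {2}(divz_eq f M%:Z) mulrC addrC addrK.
move=> i /eqP ineq; rewrite (jv_norm _ _ a1 aM ht) powR0 //.
case: asboolP => // [[j hj]]; exfalso; apply: ineq; apply: val_inj => /=.
have imod : (f %% M%:Z)%Z = i%:Z.
  have : (f == i %[mod M])%Z.
    rewrite eqz_mod_dvd; apply/dvdzP; exists j.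
    by rewrite mulrC -hj addrC.
  by move/eqP ->; rewrite modz_small // ltz_nat ltn_ord andbT.
by rewrite imod.
Qed.

Definition phi (R : realType) (alpha s p : R) (m : nat) (t : R) : R :=
  `|jv alpha s m t| `^ p.
Definition mass (R : realType) (alpha s p : R) (m : nat) (v : c00 R) : R :=
  \sum_(k < c00_bnd v) phi alpha s p m (v k).
Definition tot (R : realType) (p : R) (v : c00 R) : R :=
  \sum_(k < c00_bnd v) `|v k| `^ p.

Lemma phi0 (R : realType) (alpha s p : R) m : p != 0 -> phi alpha s p m 0 = 0.
Proof. by move=> p0; rewrite /phi jv0 normr0 powR0. Qed.

Lemma sum_ext_bnd (R : realType) (f : R -> R) (v : c00 R) (B : nat) :
  f 0 = 0 -> (c00_bnd v <= B)%N ->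
  \sum_(k < B) f (v k) = \sum_(k < c00_bnd v) f (v k).
Proof.
move=> f0 hB; rewrite [RHS](big_ord_widen B (fun k => f (v k)) hB) [RHS]big_mkcond /=.
apply: eq_bigr => k _; case: ifP => // /negbT; rewrite -leqNgt => hk.
by rewrite c00_bndP.
Qed.

Lemma mass_ge0 (R : realType) (alpha s p : R) m v : 0 <= mass alpha s p m v.
Proof. by apply: sumr_ge0 => k _; apply: powR_ge0. Qed.

Lemma mass_period (R : realType) (alpha s p : R) (M i q : nat) v :
  alpha != 0 -> alpha ^+ M = s -> mass alpha s p (i + M * q) v = mass alpha s p i v.
Proof.
by move=> a0 aM; rewrite /mass; apply: eq_bigr => k _; rewrite /phi jv_period.
Qed.

Lemma tot_mass (R : realType) (alpha s p : R) (M : nat) v :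
  1 < alpha -> alpha ^+ M = s -> (0 < M)%N -> p != 0 -> Nset alpha v ->
  tot p v = \sum_(i < M) mass alpha s p i v.
Proof.
move=> a1 aM M0 p0 Nv; rewrite /mass exchange_big /=.
by apply: eq_bigr => k _; rewrite (jv_part a1 aM M0 p0 (Nv k)).
Qed.

Lemma mass_le_tot (R : realType) (alpha s p : R) (M : nat) v (i : 'I_M) :
  1 < alpha -> alpha ^+ M = s -> p != 0 -> Nset alpha v ->
  mass alpha s p i v <= tot p v.
Proof.
move=> a1 aM p0 Nv; have M0 : (0 < M)%N by case: i => i /= ilt; apply: (leq_ltn_trans (leq0n i) ilt).
rewrite (tot_mass a1 aM M0 p0 Nv) (bigD1 i) //= lerDl.
by apply: sumr_ge0 => j _; apply: mass_ge0.
Qed.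

Lemma powR_expn (R : realType) (a p : R) (n : nat) :
  0 <= a -> (a ^+ n) `^ p = (a `^ p) ^+ n.
Proof.
move=> a0; rewrite -(powR_mulrn _ a0) -powRrM mulrC powRrM powR_mulrn //.
exact: powR_ge0.
Qed.

Lemma powR_invf (R : realType) (a p : R) : 0 < a -> (a^-1) `^ p = (a `^ p)^-1.
Proof.
move=> a0.
have H : (a^-1) `^ p * a `^ p = 1.
  by rewrite -powRM ?invr_ge0 ?ltW // mulVf ?gt_eqF // powR1.
have an : a `^ p != 0 by rewrite gt_eqF // powR_gt0.
by apply: (mulIf an); rewrite H mulVf.
Qed.

Lemma phi_scale (R : realType) (alpha s p : R) (m n : nat) t :
  0 < alpha ->
  phi alpha s p m ((alpha ^+ n)^-1 * t) =
    ((alpha `^ p) ^+ n)^-1 * phi alpha s p (m + n) t.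
Proof.
move=> a0; rewrite /phi jv_scale ?gt_eqF // normrM powRM //.
rewrite ger0_norm ?invr_ge0 ?exprn_ge0 ?ltW //.
by rewrite powR_invf ?exprn_gt0 // powR_expn // ltW.
Qed.

Lemma sum_single (R : realType) (F : seq nat) (f : nat -> R) :
  uniq F -> (forall i j, i \in F -> j \in F -> f i != 0 -> f j != 0 -> i = j) ->
  (\sum_(i <- F) f i = 0 /\ forall i, i \in F -> f i = 0) \/
  (exists i0, [/\ i0 \in F, \sum_(i <- F) f i = f i0 &
     forall i, i \in F -> i != i0 -> f i = 0]).
Proof.
move=> uF dF.
case: (pselect (exists i0, i0 \in F /\ f i0 != 0)) => [[i0 [i0F fi0]]|H].
- right; exists i0.
  have oth : forall i, i \in F -> i != i0 -> f i = 0.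
    move=> i iF /eqP ne; apply/eqP; apply: contraT => fi.
    by exfalso; apply: ne; apply: dF.
  split => //; rewrite (bigD1_seq i0) //= big1_seq ?addr0 //.
  by move=> i /andP [ne iF]; apply: oth.
- left.
  have z : forall i, i \in F -> f i = 0.
    move=> i iF; apply/eqP; apply: contraT => fi; exfalso; apply: H; by exists i.
  by split => //; apply: big1_seq => i /andP [_ iF]; apply: z.
Qed.

Lemma sum_single_map (R : realType) (F : seq nat) (f : nat -> R) (g : R -> R) :
  g 0 = 0 -> uniq F ->
  (forall i j, i \in F -> j \in F -> f i != 0 -> f j != 0 -> i = j) ->
  g (\sum_(i <- F) f i) = \sum_(i <- F) g (f i).
Proof.
move=> g0 uF dF; case: (sum_single uF dF) => [[-> z]|[i0 [i0F -> z]]].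
- by rewrite g0 big1_seq // => i /andP [_ iF]; rewrite z.
- rewrite (bigD1_seq i0) //= big1_seq ?addr0 //.
  by move=> i /andP [ne iF]; rewrite z.
Qed.

Definition ysum (R : realType) (x : nat -> c00 R) (c : nat -> R) (F : seq nat)
  (k : nat) : R := \sum_(i <- F) c i * x i k.
Definition ybnd (R : realType) (x : nat -> c00 R) (F : seq nat) : nat :=
  \max_(i <- F) c00_bnd (x i).

Lemma ybnd_ge (R : realType) (x : nat -> c00 R) F i :
  i \in F -> (c00_bnd (x i) <= ybnd x F)%N.
Proof. by move=> iF; rewrite /ybnd; apply: leq_bigmax_seq. Qed.

Lemma ysum_bnd (R : realType) (x : nat -> c00 R) c F :
  forall k, (ybnd x F <= k)%N -> ysum x c F k = 0.
Proof.
move=> k hk; apply: big1_seq => i /andP [_ iF].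
by rewrite c00_bndP ?mulr0 //; apply: leq_trans hk; apply: ybnd_ge.
Qed.

Definition yc (R : realType) (x : nat -> c00 R) c F : c00 R :=
  @C00 R (ysum x c F) (ybnd x F) (@ysum_bnd R x c F).

Definition disj (R : realType) (x : nat -> c00 R) :=
  forall a b k, x a k != 0 -> x b k != 0 -> a = b.

Lemma block_disj (R : realType) (x : nat -> c00 R) : block x -> disj x.
Proof.
move=> bx a b k ha hb; case: (ltngtP a b) => // h.
- by have := bx _ _ _ _ h ha hb; rewrite ltnn.
- by have := bx _ _ _ _ h hb ha; rewrite ltnn.
Qed.

Lemma ysum_disj (R : realType) (x : nat -> c00 R) c (F : seq nat) k :
  disj x -> forall i j, i \in F -> j \in F ->
  c i * x i k != 0 -> c j * x j k != 0 -> i = j.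
Proof.
move=> dx i j _ _; rewrite !mulf_eq0 !negb_or => /andP [_ hi] /andP [_ hj].
exact: dx hi hj.
Qed.

Lemma mass_yc (R : realType) (alpha s p : R) (x : nat -> c00 R) c F
  (cz : nat -> bool) (ce : nat -> nat) m :
  0 < alpha -> p != 0 -> uniq F -> disj x ->
  (forall i, c i = if cz i then (alpha ^+ ce i)^-1 else 0) ->
  mass alpha s p m (yc x c F) =
  \sum_(i <- F) (if cz i then ((alpha `^ p) ^+ ce i)^-1 *
                   mass alpha s p (m + ce i) (x i) else 0).
Proof.
move=> a0 p0 uF dx hc; rewrite /mass /=.
under eq_bigr => k _ do
  rewrite /ysum (sum_single_map (phi0 alpha s m p0) uF (@ysum_disj _ x c F k dx)).
rewrite exchange_big /= big_seq [RHS]big_seq; apply: eq_bigr => i iF.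
rewrite hc; case: (cz i).
- under eq_bigr => k _ do rewrite phi_scale //.
  rewrite -mulr_sumr; congr (_ * _).
  by apply: (sum_ext_bnd (phi0 alpha s _ p0)); apply: ybnd_ge.
- by rewrite big1 // => k _; rewrite mul0r phi0.
Qed.

Lemma Nset_yc (R : realType) (alpha : R) (x : nat -> c00 R) c F :
  alpha != 0 -> uniq F -> disj x -> (forall n, Nset alpha (x n)) ->
  (forall i, c i = 0 \/ exists n : nat, c i = (alpha ^+ n)^-1) ->
  Nset alpha (yc x c F).
Proof.
move=> a0 uF dx Nx hc k /=; rewrite /ysum.
case: (sum_single uF (@ysum_disj _ x c F k dx)) => [[-> _]|[i0 [_ -> _]]].
  by left.
case: (hc i0) => [->|[n ->]]; first by left; rewrite mul0r.
by rewrite exprnN; apply: Cset_scale => //; apply: Nx.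
Qed.

Lemma ysum_nz (R : realType) (x : nat -> c00 R) c F k :
  ysum x c F k != 0 -> exists2 i, i \in F & x i k != 0.
Proof.
move=> h; case: (pselect (exists2 i, i \in F & x i k != 0)) => // hn.
exfalso; move: h; rewrite /ysum big1_seq ?eqxx //.
move=> i /andP [_ iF]; apply/eqP; rewrite mulf_eq0; apply/orP; right.
by apply: contraT => xi; exfalso; apply: hn; exists i.
Qed.

Lemma pigeon (T : finType) (tau : nat -> T) :
  exists th, forall B, exists n, (B <= n)%N /\ tau n = th.
Proof.
case: (pselect (exists th, forall B, exists n, (B <= n)%N /\ tau n = th)) => // H.
exfalso.
have H' : forall th, exists B, forall n, (B <= n)%N -> tau n != th.
  move=> th; case: (pselect (exists B, forall n, (B <= n)%N -> tau n != th)) => // H2.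
  exfalso; apply: H; exists th => B.
  case: (pselect (exists n, (B <= n)%N /\ tau n = th)) => // H3.
  exfalso; apply: H2; exists B => n Bn; apply/eqP => E; apply: H3; exists n.
  by split.
have [f hf] := boolp.choice H'.
have := hf (tau (\max_(th : T) f th)) (\max_(th : T) f th).
by rewrite eqxx => /(_ (leq_bigmax _)).
Qed.

Fixpoint gseq (h : nat -> nat) (j : nat) : nat :=
  if j is j'.+1 then h (gseq h j').+1 else h 0.

Lemma gseq_S (h : nat -> nat) j :
  (forall B, (B <= h B)%N) -> (gseq h j < gseq h j.+1)%N.
Proof. by move=> hh /=; apply: hh. Qed.

Lemma gseq_mono (h : nat -> nat) i j :
  (forall B, (B <= h B)%N) -> (i < j)%N -> (gseq h i < gseq h j)%N.
Proof.
move=> hh; elim: j => // j IH; rewrite ltnS leq_eqVlt => /orP [/eqP ->|/IH h1].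
  exact: gseq_S.
by apply: ltn_trans h1 _; apply: gseq_S.
Qed.

Lemma gseq_ge (h : nat -> nat) j : (forall B, (B <= h B)%N) -> (j <= gseq h j)%N.
Proof.
move=> hh; elim: j => [//|j IH]; apply: leq_ltn_trans IH _; exact: gseq_S.
Qed.

Lemma gseq_inj (h : nat -> nat) : (forall B, (B <= h B)%N) -> injective (gseq h).
Proof.
move=> hh i j E; case: (ltngtP i j) => // ij.
- by have := gseq_mono hh ij; rewrite E ltnn.
- by have := gseq_mono hh ij; rewrite E ltnn.
Qed.

Definition ginv (g : nat -> nat) (i : nat) : nat :=
  index i [seq g j | j <- iota 0 i.+1].

Lemma ginvK (g : nat -> nat) j :
  injective g -> (j <= g j)%N -> ginv g (g j) = j.
Proof.
move=> ig jg; rewrite /ginv index_map //.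
have jlt : (j < size (iota 0 (g j).+1))%N by rewrite size_iota ltnS.
have := index_uniq 0 jlt (iota_uniq 0 _); rewrite nth_iota //.
Qed.

Lemma sum_split (R : realType) (a b : nat) (F : nat -> R) :
  \sum_(u < (a * b)%N) F u = \sum_(t < a) \sum_(j < b) F (t * b + j)%N.
Proof.
elim: a => [|a IH]; first by rewrite mul0n !big_ord0.
rewrite big_ord_recr /= -IH mulSn addnC.
rewrite -!(big_mkord xpredT) (@big_cat_nat _ _ _ (a * b)%N) ?leq_addr //=.
congr (_ + _).
rewrite -{1}(add0n (a * b)%N) big_addn addKn big_mkord; apply: eq_bigr => j _.
by rewrite addnC.
Qed.

Lemma sum_count (R : realType) (N a : nat) (c : R) :
  \sum_(j < N) (if (j < a)%N then c else 0) = (minn a N)%:R * c.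
Proof.
elim: N => [|N IH]; first by rewrite big_ord0 minn0 mul0r.
rewrite big_ord_recr /= IH.
case: (ltnP N a) => h.
- have -> : minn a N.+1 = N.+1 by apply/minn_idPr.
  by rewrite -[(N.+1)%:R]natr1 mulrDl mul1r.
- have -> : minn a N.+1 = a by apply/minn_idPl; apply: leq_trans h _.
  by rewrite addr0.
Qed.

Lemma sum_rot (R : realType) (M m : nat) (F : nat -> R) :
  (0 < M)%N -> \sum_(t < M) F ((m + t) %% M)%N = \sum_(i < M) F i.
Proof.
move=> M0.
pose h := fun t : 'I_M => Ordinal (ltn_pmod (m + t) M0).
have hi : injective h.
  move=> t t' /(congr1 val) /= /eqP; rewrite eqn_modDl !modn_small ?ltn_ord //.
  by move/eqP => E; apply: val_inj.
by rewrite [RHS](reindex_inj hi).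
Qed.

Lemma bound_core (R : realType) (K d : R) (M Nm m : nat) (nt th : nat -> nat)
  (w : nat -> R) (A : nat -> nat -> R) :
  (0 < M)%N -> 0 < d -> 0 <= K ->
  (forall t, (t < M)%N -> (nt t <= Nm)%N) ->
  (forall t, (t < M)%N -> 0 <= w t /\ K <= (nt t)%:R * w t <= 2 * K) ->
  (forall t j, (t < M)%N -> (j < Nm)%N ->
     (th ((m + t) %% M)%N)%:R * d <= A t j <= (th ((m + t) %% M)%N).+1%:R * d) ->
  K * (d * \sum_(i < M) (th i)%:R) <=
    \sum_(t < M) \sum_(j < Nm) (if (j < nt t)%N then w t * A t j else 0)
  <= 2 * K * (d * \sum_(i < M) (th i).+1%:R).
Proof.
move=> M0 d0 K0 hnt hw hA.
rewrite -(sum_rot m (fun i => (th i)%:R) M0) -(sum_rot m (fun i => (th i).+1%:R) M0).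
rewrite !mulr_sumr; apply/andP; split; apply: ler_sum => t _.
- have [w0 /andP [hK _]] := hw t (ltn_ord t).
  apply: le_trans (_ : \sum_(j < Nm) (if (j < nt t)%N then
        w t * ((th ((m + t) %% M)%N)%:R * d) else 0) <= _).
    rewrite sum_count (minn_idPl (hnt t (ltn_ord t))) [d * _]mulrC mulrA.
    by apply: ler_wpM2r => //; apply: mulr_ge0 => //; apply: ltW.
  apply: ler_sum => j _; case: ifP => // _.
  by apply: ler_wpM2l => //; have /andP [] := hA t j (ltn_ord t) (ltn_ord j).
- have [w0 /andP [_ hK]] := hw t (ltn_ord t).
  apply: (@le_trans _ _ (\sum_(j < Nm) (if (j < nt t)%N then
        w t * ((th ((m + t) %% M)%N).+1%:R * d) else 0))).
    apply: ler_sum => j _; case: ifP => // _.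
    by apply: ler_wpM2l => //; have /andP [] := hA t j (ltn_ord t) (ltn_ord j).
  rewrite sum_count (minn_idPl (hnt t (ltn_ord t))) [d * _]mulrC mulrA.
  by apply: ler_wpM2r => //; apply: mulr_ge0 => //; apply: ltW.
Qed.

Unset Implicit Arguments.
From mathcomp Require Import ring lra.

Lemma prelim (R : realType) (p : R) (r : nat) (alpha : R) :
  1 < p -> (1 < r)%N -> 0 < alpha ->
  alpha ^+ (trunc_log 2 r) = (r%:R : R) `^ p^-1 ->
  [/\ (0 < trunc_log 2 r)%N, 2 <= alpha `^ p & 1 < alpha].
Proof.
move=> p1 r1 a0 aM.
have p0 : 0 < p by apply: lt_trans p1.
have M0 : (0 < trunc_log 2 r)%N by rewrite trunc_log_gt0.
have bM : (alpha `^ p) ^+ (trunc_log 2 r) = r%:R.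
  rewrite -powR_expn ?ltW // aM -powRrM mulVf ?gt_eqF // powRr1 //.
have b2 : 2 <= alpha `^ p.
  have h2 : (2:R) ^+ (trunc_log 2 r) <= (alpha `^ p) ^+ (trunc_log 2 r).
    by rewrite bM -natrX ler_nat trunc_logP // ltnW.
  by move: h2; rewrite (ler_pXn2r M0) // nnegrE ?powR_ge0.
split => //.
rewrite ltNge; apply/negP => a1.
have : alpha `^ p <= 1 `^ p by apply: ge0_ler_powR => //; rewrite ?nnegrE ltW.
by rewrite powR1 => h; move: (le_trans b2 h); rewrite -[1]/(1%:R) ler_nat.
Qed.

Lemma tot_bounds (R : realType) (p alpha : R) (v : c00 R) :
  0 < p -> 0 < alpha -> alpha ^- 2 <= lpnorm p v <= alpha ^- 1 ->
  ((alpha `^ p) ^+ 2)^-1 <= tot p v <= (alpha `^ p)^-1.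
Proof.
move=> p0 a0 /andP [h1 h2]; have pp : 0 <= p by apply: ltW.
have t0 : 0 <= tot p v by apply: sumr_ge0 => k _; apply: powR_ge0.
have E : tot p v = (lpnorm p v) `^ p.
  by rewrite /lpnorm -/(tot p v) -powRrM mulVf ?gt_eqF // powRr1.
have L0 : 0 <= lpnorm p v by apply: powR_ge0.
rewrite E; apply/andP; split.
- have a0' : 0 <= alpha by apply: ltW.
  rewrite -(powR_expn _ _ a0') -powR_invf ?exprn_gt0 //.
  by apply: ge0_ler_powR; rewrite ?nnegrE ?invr_ge0 ?exprn_ge0.
- rewrite -powR_invf //; rewrite expr1 in h2.
  by apply: ge0_ler_powR; rewrite ?nnegrE ?invr_ge0 // ltW.
Qed.

Lemma final_bounds (R : realType) (p alpha z : R) :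
  0 < p -> 0 < alpha ->
  ((alpha `^ p) ^+ 3)^-1 <= z <= 1 ->
  alpha ^- 3 <= z `^ p^-1 <= 1.
Proof.
move=> p0 a0 /andP [h1 h2]; have pq : 0 <= p by apply: ltW.
have pp : 0 <= p^-1 by rewrite invr_ge0.
have z0 : 0 <= z by apply: le_trans h1; rewrite invr_ge0 exprn_ge0 // powR_ge0.
apply/andP; split.
- have -> : alpha ^- 3 = (((alpha `^ p) ^+ 3)^-1) `^ p^-1.
    have a0' : 0 <= alpha by apply: ltW.
    rewrite -(powR_expn _ _ a0') -powR_invf ?exprn_gt0 // -powRrM mulfV ?gt_eqF //.
    by rewrite powRr1 // invr_ge0 exprn_ge0 // ltW.
  by apply: ge0_ler_powR; rewrite ?nnegrE ?invr_ge0 ?exprn_ge0 ?powR_ge0.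
- apply: (@le_trans _ _ (1 `^ p^-1)); last by rewrite powR1.
  by apply: ge0_ler_powR; rewrite ?nnegrE.
Qed.

Lemma numeric (R : realFieldType) (b T X Y Md : R) :
  2 <= b -> (b ^+ 2)^-1 <= T <= b^-1 -> Md = (b ^+ 2)^-1 / 4 ->
  T - Md <= X -> Y <= T + Md ->
  (b ^+ 3)^-1 <= b / 3 * X /\ 2 * (b / 3) * Y <= 1.
Proof.
move=> b2 /andP [T1 T2] hMd hX hY.
have b0 : 0 < b by apply: lt_le_trans b2.
set u := b^-1 in T2.
have bu : b * u = 1 by rewrite /u mulfV // gt_eqF.
have u0 : 0 < u by rewrite /u invr_gt0.
have E2 : (b ^+ 2)^-1 = u ^+ 2 by rewrite exprVn.
have E3 : (b ^+ 3)^-1 = u ^+ 3 by rewrite exprVn.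
rewrite E2 in T1 hMd; rewrite E3.
have uh : u <= 1 / 2 by nra.
have X1 : 3 / 4 * u ^+ 2 <= X by lra.
have Y1 : Y <= u + u ^+ 2 / 4 by lra.
split.
- have h1 : b / 3 * (3 / 4 * u ^+ 2) <= b / 3 * X by apply: ler_wpM2l; lra.
  have h2 : b / 3 * (3 / 4 * u ^+ 2) = u / 4.
    have -> : u / 4 = (b * u) * u / 4 by rewrite bu mul1r.
    by rewrite expr2; field.
  have h3 : u ^+ 3 <= u / 4.
    have : u ^+ 2 <= 1 / 4 by nra.
    by rewrite exprS; nra.
  lra.
- have h1 : 2 * (b / 3) * Y <= 2 * (b / 3) * (u + u ^+ 2 / 4) by apply: ler_wpM2l; lra.
  have h2 : 2 * (b / 3) * (u + u ^+ 2 / 4) = 2 / 3 * (b * u) + (b * u) * u / 6.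
    by rewrite expr2; field.
  rewrite bu in h2; nra.
Qed.

Theorem mainTheorem6 (R : realType) (p : R) (r : nat) (alpha : R)
  (x : nat -> c00 R) :
  1 < p -> (1 < r)%N ->
  0 < alpha ->
  alpha ^+ (trunc_log 2 r) = (r%:R : R) `^ p^-1 ->
  block x ->
  (forall n, Nset alpha (x n)) ->
  (forall n, alpha ^- 2 <= lpnorm p (x n) <= alpha ^- 1) ->
  exists (y : nat -> c00 R) (F : nat -> seq nat) (c : nat -> R),
    (forall n, uniq (F n)) /\ [/\
        (forall n m i j, (n < m)%N -> i \in F n -> j \in F m -> (i < j)%N),
        (forall n k, y n k = \sum_(i <- F n) c i * x i k),
        (forall n, Nset alpha (y n)),
        block y &
        (forall n m, alpha ^- 3 <= lpnorm p (J alpha ((r%:R : R) `^ p^-1) m (y n)) <= 1)].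
Proof.
move=> p1 r1 a0 aM bx Nx hx.
have [M0 b2 a1] := @prelim R p r alpha p1 r1 a0 aM.
set M := trunc_log 2 r in M0 aM *.
set s := (r%:R : R) `^ p^-1 in aM *.
set beta := alpha `^ p in b2 *.
have p0 : 0 < p by apply: lt_trans p1.
have pn0 : p != 0 by rewrite gt_eqF.
have an0 : alpha != 0 by rewrite gt_eqF.
have bpos : 0 < beta by apply: lt_le_trans b2.
have dx := block_disj bx.
pose d : R := (beta ^+ 2)^-1 / (4 * M%:R).
have d0 : 0 < d.
  by rewrite /d divr_gt0 ?invr_gt0 ?exprn_gt0 ?mulr_gt0 ?ltr0n.
pose K : R := beta / 3.
have K0 : 0 <= K by rewrite /K divr_ge0 ?ltW.
pose G := Num.Def.trunc (beta^-1 / d).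
pose typ := fun n => [ffun i : 'I_M =>
  (inord (Num.Def.trunc (mass alpha s p i (x n) / d)) : 'I_G.+1)].
have [th0 Hth] := pigeon typ.
have [hf Hhf] : exists hf : nat -> nat, forall B, (B <= hf B)%N /\ typ (hf B) = th0.
  by case: (boolp.choice Hth) => hf Hf; exists hf.
have hfge : forall B, (B <= hf B)%N by move=> B; case: (Hhf B).
pose g := gseq hf.
have gtyp : forall D, typ (g D) = th0.
  by move=> [|D]; rewrite /g /=; apply: (proj2 (Hhf _)).
have ginj : injective g by apply: gseq_inj.
have gge : forall D, (D <= g D)%N by move=> D; apply: gseq_ge.
pose th := fun i : nat => oapp (fun o : 'I_M => val (th0 o)) 0%N (insub i).
have bin : forall D i, (i < M)%N ->
    (th i)%:R * d <= mass alpha s p i (x (g D)) <= (th i).+1%:R * d.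
  move=> D i iM.
  have mz : 0 <= mass alpha s p i (x (g D)) / d.
    by rewrite divr_ge0 ?mass_ge0 ?ltW.
  have thi : th i = Num.Def.trunc (mass alpha s p i (x (g D)) / d).
    rewrite /th insubT /= -(gtyp D) ffunE /= inordK //.
    rewrite ltnS; apply: le_truncn; rewrite ler_pM2r ?invr_gt0 //.
    have := @mass_le_tot R alpha s p M (x (g D)) (Ordinal iM) a1 aM pn0 (Nx (g D)) => /= h.
    apply: le_trans h _.
    by have /andP [_ ] := @tot_bounds R p alpha _ p0 a0 (hx (g D)).
  have := truncn_itv mz; rewrite -thi => /andP [l u].
  apply/andP; split; first by move: l; rewrite ler_pdivlMr.
  by apply: ltW; move: u; rewrite ltr_pdivrMr.
pose e := fun t : nat => (t + 2 * M)%N.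
pose nt := fun t : nat => (Num.Def.trunc (K * beta ^+ e t)).+1.
pose Nm := \max_(t < M) nt t.
pose S := (M * Nm)%N.
pose F := fun n : nat => [seq g (n * S + u)%N | u <- iota 0 S].
pose cz := fun i : nat => ((ginv g i %% S) %% Nm < nt ((ginv g i %% S) %/ Nm)%N)%N.
pose ce := fun i : nat => e ((ginv g i %% S) %/ Nm)%N.
pose c := fun i : nat => if cz i then (alpha ^+ ce i)^-1 else 0.
pose y := fun n => yc x c (F n).
exists y, F, c.
have Fmem : forall n i, i \in F n -> exists2 u, (u < S)%N & i = g (n * S + u)%N.
  by move=> n i /mapP [u]; rewrite mem_iota add0n => /andP [_ uS] ->; exists u.
have Fo : forall n m i j, (n < m)%N -> i \in F n -> j \in F m -> (i < j)%N.
  move=> n m i j nm /Fmem [u uS ->] /Fmem [u' uS' ->]; apply: gseq_mono => //.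
  nia.
have uF : forall n, uniq (F n).
  by move=> n; rewrite map_inj_uniq ?iota_uniq // => u v /ginj /addnI.
split => //; split => //.
- move=> n; apply: Nset_yc => // i; rewrite /c; case: (cz i).
  + by right; exists (ce i).
  + by left.
- move=> n m i j nm /ysum_nz [i' i'F xi'] /ysum_nz [j' j'F xj'].
  exact: bx (Fo _ _ _ _ nm i'F j'F) xi' xj'.
move=> n m.
rewrite (_ : lpnorm p (J alpha s m (y n)) = mass alpha s p m (y n) `^ p^-1) //.
apply: final_bounds => //.
rewrite (@mass_yc R alpha s p x c (F n) cz ce m a0 pn0 (uF n) dx (fun i => erefl)).
rewrite big_map (_ : iota 0 S = index_iota 0 S); last by rewrite /index_iota subn0.
rewrite big_mkord.
have gi : forall u : 'I_S, (ginv g (g (n * S + u)%N) %% S)%N = u.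
  move=> u; rewrite ginvK // modnMDl modn_small //.
under eq_bigr => u _ do rewrite /cz /ce gi.
rewrite /S (sum_split M Nm (fun u => if (u %% Nm < nt (u %/ Nm)%N)%N
      then beta ^- e (u %/ Nm)%N *
       mass alpha s p (m + e (u %/ Nm)%N) (x (g (n * (M * Nm) + u)%N))
      else 0)).
have Nm0 : forall j, (j < Nm)%N -> (0 < Nm)%N by move=> j /(leq_ltn_trans (leq0n j)).
under eq_bigr => t _ do under eq_bigr => j _ do
  rewrite divnMDl ?(Nm0 j (ltn_ord j)) // divn_small ?ltn_ord // addn0
          modnMDl modn_small ?ltn_ord //.
have hnt : forall t, (t < M)%N -> (nt t <= Nm)%N.
  by move=> t tM; exact: (leq_bigmax (F := fun t : 'I_M => nt t) (Ordinal tM)).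
have hw : forall t, (t < M)%N ->
    0 <= beta ^- e t /\ K <= (nt t)%:R * beta ^- e t <= 2 * K.
  move=> t tM.
  have Be2 : 2 <= beta ^+ e t.
    have -> : e t = (e t).-1.+1 by rewrite prednK // /e; lia.
    rewrite exprS; have : 1 <= beta ^+ (e t).-1 by apply: exprn_ege1; lra.
    nra.
  set Be := beta ^+ e t in Be2 *.
  have wB : Be^-1 * Be = 1 by rewrite mulVf // gt_eqF //; lra.
  have w0 : 0 < Be^-1 by rewrite invr_gt0; lra.
  have z0 : 0 <= K * Be by apply: mulr_ge0 => //; lra.
  have := truncn_itv z0 => /andP [l u].
  have ntE : (nt t)%:R = (Num.Def.trunc (K * Be)).+1%:R :> R by [].
  have l' : (nt t)%:R <= K * Be + 1 by rewrite ntE -natr1; lra.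
  have u' : K * Be < (nt t)%:R by rewrite ntE.
  have wh : Be^-1 <= 1 / 2 by nra.
  have Kb : 2 / 3 <= K by rewrite /K; lra.
  split; first exact: ltW.
  apply/andP; split; nra.
have hA : forall t j, (t < M)%N -> (j < Nm)%N ->
    (th ((m + t) %% M)%N)%:R * d <=
      mass alpha s p (m + e t) (x (g (n * (M * Nm) + (t * Nm + j))%N))
    <= (th ((m + t) %% M)%N).+1%:R * d.
  move=> t j tM jN.
  rewrite (_ : (m + e t) = ((m + t) %% M) + M * ((m + t) %/ M + 2))%N; last first.
    by rewrite /e; have := divn_eq (m + t) M; lia.
  rewrite mass_period //; apply: bin; exact: ltn_pmod.
have := bound_core M0 d0 K0 hnt hw hA => /andP [lo hi].
have T0 := @tot_bounds R p alpha (x (g 0)) p0 a0 (hx (g 0)).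
have tm := @tot_mass R alpha s p M (x (g 0)) a1 aM M0 pn0 (Nx _).
have Md : M%:R * d = \sum_(i < M) d by rewrite sumr_const card_ord mulr_natl.
have sl : tot p (x (g 0)) - M%:R * d <= d * \sum_(i < M) (th i)%:R.
  rewrite tm Md -sumrB mulr_sumr; apply: ler_sum => i _.
  rewrite mulrC lerBlDr; have /andP [_ h] := bin 0%N i (ltn_ord i).
  by move: h; rewrite -natr1 mulrDl mul1r.
have su : d * \sum_(i < M) (th i).+1%:R <= tot p (x (g 0)) + M%:R * d.
  rewrite tm Md -big_split mulr_sumr; apply: ler_sum => i _.
  rewrite mulrC -natr1 mulrDl mul1r lerD2r; have /andP [h _] := bin 0%N i (ltn_ord i).
  exact: h.
have hMd : M%:R * d = (beta ^+ 2)^-1 / 4.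
  by rewrite /d; field; rewrite pnatr_eq0 -lt0n M0 /= andbT gt_eqF.
have [nl nu] := @numeric R _ _ _ _ _ b2 T0 hMd sl su.
by apply/andP; split; [apply: le_trans lo | apply: le_trans hi _].
Qed.
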